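(* There exists $(X_1,\dots,X_5)\in M'_5$, with $X_j=\begin{bmatrix}A_j\\ B_j\end{bmatrix}$ where $A_j,B_j\in\mathbb M^{2\times 2}$, and there exist real constants $c_1,\dots,c_5$ and $d_1,\dots,d_5$ such that \[ c_i-c_j+d_i\det(A_i-A_j)+\langle A_i-A_j,\,B_iJ\rangle<0\qquad\text{for all } i\neq j,\ i,j\in\{1,\dots,5\}. \]
   Context: $\mathbb M^{m\times n}$ is the space of real $m\times n$ matrices; $\langle\cdot,\cdot\rangle$ is the Frobenius inner product on $\mathbb M^{2\times 2}$, and $J=\begin{pmatrix}0&-1\\1&0\end{pmatrix}$. For $N\ge 3$, an $N$-tuple $(X_1,\dots,X_N)$ in $\mathbb M^{4\times 2}$ is a $T_N$-configuration if there exist $P\in\mathbb M^{4\times 2}$, rank-one matrices $C_1,\dots,C_N\in\mathbb M^{4\times 2}$ with $\sum_{j=1}^N C_j=0$, and numbers $\kappa_1,\dots,\kappa_N>1$ such that $X_j=P+C_1+\dots+C_{j-1}+\kappa_jC_j$ for $j=1,\dots,N$. $M'_N$ denotes the set of $T_N$-configurations in $\mathbb M^{4\times 2}$ whose rank-one matrices have the form $C_j=\begin{pmatrix}p_j\\ (\alpha_j\cdot\delta)q_j\end{pmatrix}\otimes\alpha_j$ (here $\begin{pmatrix}p_j\\ (\alpha_j\cdot\delta)q_j\end{pmatrix}\in\mathbb R^4$), where $p_j,q_j,\alpha_j,\delta\in\mathbb R^2$, $\alpha_j\ne 0$, at least three of the $\alpha_j$ are mutually non-collinear, and $\sum_{j=1}^N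 p_j\otimes\alpha_j=0$, $\sum_{j=1}^N q_j\otimes\alpha_j\otimes\alpha_j=0$. For $X\in\mathbb M^{4\times 2}$ we write $X=\begin{bmatrix}A\\ B\end{bmatrix}$ with $A$ the first two rows and $B$ the last two rows. *)

(* Defs.v *)
From HB Require Import structures.
From mathcomp Require Import all_boot all_order all_algebra.
From mathcomp Require Import Rstruct.
Set Implicit Arguments. Unset Strict Implicit. Unset Printing Implicit Defensive.
Import Order.TTheory GRing.Theory Num.Theory.
Local Open Scope ring_scope.

Section Defs.
Variable R : realFieldType.

Definition mat42 := 'M[R]_(2 + 2, 2).

Definition blockA (X : mat42) : 'M[R]_2 := usubmx X.
Definition blockB (X : mat42) : 'M[R]_2 := dsubmx X.

Definition frob (A B : 'M[R]_2) : R := \tr (A^T *m B).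

Definition Jmx : 'M[R]_2 :=
  \matrix_(i < 2, j < 2)
    (if (i == 0 :> nat) && (j == 1 :> nat) then -1
     else if (i == 1 :> nat) && (j == 0 :> nat) then 1 else 0).

Definition dot2 (u v : 'cV[R]_2) : R := \sum_(k < 2) u k 0 * v k 0.

Definition collinear (u v : 'cV[R]_2) : Prop := (\rank (row_mx u v) <= 1)%N.

Definition TN_config_with (N : nat) (X : 'I_N -> mat42)
    (P : mat42) (C : 'I_N -> mat42) (kappa : 'I_N -> R) : Prop :=
  [/\ (3 <= N)%N,
      (forall j, \rank (C j) = 1%N),
      \sum_(j < N) C j = 0,
      (forall j, 1 < kappa j) &
      (forall j : 'I_N,
          X j = P + \sum_(i < N | (i < j)%N) C i + kappa j *: C j)].

Definition TN_config (N : nat) (X : 'I_N -> mat42) : Prop :=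
  exists P C kappa, @TN_config_with N X P C kappa.

(* The set M'_N. The rank-one matrix C_j = (p_j ; (alpha_j . delta) q_j) (x) alpha_j
   is represented as the 4x2 matrix  col_mx p_j ((alpha_j.delta) q_j) *m alpha_j^T. *)
Definition in_Mprime (N : nat) (X : 'I_N -> mat42) : Prop :=
  exists (P : mat42) (C : 'I_N -> mat42) (kappa : 'I_N -> R)
         (p q alpha : 'I_N -> 'cV[R]_2) (delta : 'cV[R]_2),
  @TN_config_with N X P C kappa /\
  [/\
      (forall j, C j = col_mx (p j) (dot2 (alpha j) delta *: q j) *m (alpha j)^T),
      (forall j, alpha j != 0),
      (exists i j k : 'I_N,
          [/\ i != j, j != k, i != k &
            [/\ ~ collinear (alpha i) (alpha j),
              ~ collinear (alpha j) (alpha k) &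
              ~ collinear (alpha i) (alpha k)]]),
      \sum_(j < N) p j *m (alpha j)^T = 0 &
      (forall a b c : 'I_2,
          \sum_(j < N) q j a 0 * alpha j b 0 * alpha j c 0 = 0)].

End Defs.

(* Main.v *)
Require Import Defs.
From HB Require Import structures.
From mathcomp Require Import all_boot all_order all_algebra.
From mathcomp Require Import Rstruct.
From mathcomp Require Import ring lra.
Import Order.TTheory GRing.Theory Num.Theory.
Local Open Scope ring_scope.

Notation RR := Rdefinitions.R.

Lemma det2E (F : comNzRingType) (M : 'M[F]_2) : \det M = M 0 0 * M 1 1 - M 0 1 * M 1 0.
Proof.
rewrite (expand_det_row _ 0) !big_ord_recr big_ord0 /= add0r.
rewrite /cofactor !det_mx11 !mxE /=.
have e1 : widen_ord (leqnSn 1) (ord_max : 'I_1) = 0 :> 'I_2 by apply/val_inj.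
have e2 : lift (0 : 'I_2) (0 : 'I_1) = 1 by apply/val_inj.
have e3 : lift (ord_max : 'I_2) (0 : 'I_1) = 0 by apply/val_inj.
have e4 : (ord_max : 'I_2) = 1 by apply/val_inj.
rewrite e1 e2 e3 e4 expr0 expr1; ring.
Qed.

Definition ent (s : seq (seq RR)) (k r : nat) : RR := nth 0 (nth [::] s k) r.
Definition ent3 (s : seq (seq (seq RR))) (k r c : nat) : RR :=
  nth 0 (nth [::] (nth [::] s k) r) c.

Definition alt : seq (seq RR) := [:: [:: 1; 0]; [:: 0; 1]; [:: 1; 1]; [:: 1; -1]; [:: 1; 2]].
Definition ptab : seq (seq RR) :=
  [:: [:: -5/2; -2]; [:: -1/2; -3/2]; [:: 3/2; -1/2]; [:: 1; 1]; [:: 0; 3/2]].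
Definition qtab : seq (seq RR) :=
  [:: [:: 3/2; 2]; [:: -3; -4]; [:: -3; -4]; [:: 0; 0]; [:: 3/2; 2]].
Definition ktab : seq RR := [:: 4; 3/2; 5; 5/2; 2].
Definition ctab : seq RR := [:: 0; -7/2; 117/8; 131/2; 35/2].
Definition dtab : seq RR := [:: 1/2; -23/8; -45/8; 1/4; -55/8].

Definition al (k : 'I_5) : 'cV[RR]_2 := \col_(r < 2) ent alt k r.
Definition pp (k : 'I_5) : 'cV[RR]_2 := \col_(r < 2) ent ptab k r.
Definition qq (k : 'I_5) : 'cV[RR]_2 := \col_(r < 2) ent qtab k r.
Definition delta : 'cV[RR]_2 := \col_(r < 2) ent [:: [:: 0; 3/2]] 0 r.
Definition kap (k : 'I_5) : RR := nth 0 ktab k.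
Definition CC (k : 'I_5) : mat42 RR :=
  col_mx (pp k) (dot2 (al k) delta *: qq k) *m (al k)^T.
Definition XX (k : 'I_5) : mat42 RR :=
  0 + \sum_(i < 5 | (i < k)%N) CC i + kap k *: CC k.
Definition cc (k : 'I_5) : RR := nth 0 ctab k.
Definition ddd (k : 'I_5) : RR := nth 0 dtab k.

Lemma CEu k (x : 'I_2) (y : 'I_2) : CC k (lshift 2 x) y = pp k x 0 * al k y 0.
Proof. by rewrite /CC !mxE big_ord1 col_mxEu !mxE. Qed.
Lemma CEd k (x : 'I_2) (y : 'I_2) :
  CC k (rshift 2 x) y = dot2 (al k) delta * qq k x 0 * al k y 0.
Proof. by rewrite /CC !mxE big_ord1 col_mxEd !mxE. Qed.

Lemma dot2E k : dot2 (al k) delta = ent alt k 1 * (3/2).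
Proof. by rewrite /dot2 !big_ord_recr big_ord0 /= !mxE /ent /=; ring. Qed.

Lemma ord5P (P : 'I_5 -> Prop) : P 0 -> P 1 -> P 2%:R -> P 3%:R -> P 4%:R -> forall k, P k.
Proof.
move=> H0 H1 H2 H3 H4 [[|[|[|[|[|k]]]]] Hk].
- by have -> : Ordinal Hk = 0 by apply/val_inj.
- by have -> : Ordinal Hk = 1 by apply/val_inj.
- by have -> : Ordinal Hk = 2%:R by apply/val_inj.
- by have -> : Ordinal Hk = 3%:R by apply/val_inj.
- by have -> : Ordinal Hk = 4%:R by apply/val_inj.
- by [].
Qed.

Lemma ord2P (P : 'I_2 -> Prop) : P 0 -> P 1 -> forall k, P k.
Proof.
move=> H0 H1 [[|[|k]] Hk].
- by have -> : Ordinal Hk = 0 by apply/val_inj.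
- by have -> : Ordinal Hk = 1 by apply/val_inj.
- by [].
Qed.

Lemma XXE (G : 'I_5 -> mat42 RR) (k : 'I_5) a b :
  (0 + \sum_(i < 5 | (i < k)%N) G i + kap k *: G k) a b =
  \sum_(i < 5 | (i < k)%N) G i a b + kap k * G k a b.
Proof. by rewrite !mxE summxE add0r. Qed.

Definition Atab : seq (seq (seq RR)) :=
  [:: [:: [:: -10; 0]; [:: -8; 0]];
      [:: [:: -5/2; -3/4]; [:: -2; -9/4]];
      [:: [:: 5; 7]; [:: -9/2; -4]];
      [:: [:: 3/2; -3/2]; [:: 0; -9/2]];
      [:: [:: 0; 0]; [:: 3/2; 3]]].
Definition Btab : seq (seq (seq RR)) :=
  [:: [:: [:: 0; 0]; [:: 0; 0]];
      [:: [:: 0; -27/4]; [:: 0; -9]];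
      [:: [:: -45/2; -27]; [:: -30; -36]];
      [:: [:: -9/2; -9]; [:: -6; -12]];
      [:: [:: 9/2; 9]; [:: 6; 12]]].
Definition Am (k : 'I_5) : 'M[RR]_2 := \matrix_(x < 2, y < 2) ent3 Atab k x y.
Definition Bm (k : 'I_5) : 'M[RR]_2 := \matrix_(x < 2, y < 2) ent3 Btab k x y.

Lemma XXA k : blockA (XX k) = Am k.
Proof.
apply/matrixP => x y; rewrite /blockA [LHS]mxE /XX XXE /Am [RHS]mxE.
rewrite CEu (eq_bigr _ (fun i _ => CEu i x y)).
move: k x y; apply: ord5P; apply: ord2P; apply: ord2P;
rewrite big_mkcond !big_ord_recr big_ord0 /= !mxE /ent /ent3 /kap /=; lra.
Qed.

Lemma XXB k : blockB (XX k) = Bm k.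
Proof.
apply/matrixP => x y; rewrite /blockB [LHS]mxE /XX XXE /Bm [RHS]mxE.
rewrite CEd (eq_bigr _ (fun i _ => CEd i x y)).
move: k x y; apply: ord5P; apply: ord2P; apply: ord2P;
rewrite big_mkcond !big_ord_recr big_ord0 /= !dot2E !mxE /ent /ent3 /kap /=; lra.
Qed.

Lemma ineq (i j : 'I_5) : i != j ->
  cc i - cc j + ddd i * \det (blockA (XX i) - blockA (XX j))
  + frob (blockA (XX i) - blockA (XX j)) (blockB (XX i) *m Jmx _) < 0.
Proof.
rewrite !XXA !XXB det2E /frob /mxtrace.
rewrite !(big_ord_recr, big_ord0, mxE) /=.
move: i j; apply: ord5P; apply: ord5P; move=> H;
  rewrite ?eqxx // in H; rewrite /cc /ddd /ent3 /=; lra.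
Qed.

Lemma ncol (u v : 'cV[RR]_2) : u 0 0 * v 1 0 - u 1 0 * v 0 0 != 0 -> ~ collinear u v.
Proof.
move=> H; rewrite /collinear.
have c0 i : row_mx u v i 0 = u i 0.
  by rewrite -[in RHS](row_mxEl u v); congr (row_mx u v i _); apply/val_inj.
have c1 i : row_mx u v i 1 = v i 0.
  by rewrite -[in RHS](row_mxEr u v); congr (row_mx u v i _); apply/val_inj.
have U : (row_mx u v : 'M[RR]_2) \in unitmx.
  by rewrite unitmxE unitfE det2E !c0 !c1 [v 0 0 * u 1 0]mulrC.
by rewrite (mxrank_unit U).
Qed.

Lemma rankC k : \rank (CC k) = 1%N.
Proof.
apply/eqP; rewrite eqn_leq; apply/andP; split.
  by apply: leq_trans (mxrankM_maxl _ _) _; exact: rank_leq_col.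
rewrite lt0n mxrank_eq0; apply/eqP => /matrixP H.
move: k H; apply: ord5P => H.
- by move: (H (lshift 2 0) 0); rewrite CEu !mxE /ent /=; lra.
- by move: (H (lshift 2 0) 1); rewrite CEu !mxE /ent /=; lra.
- by move: (H (lshift 2 0) 0); rewrite CEu !mxE /ent /=; lra.
- by move: (H (lshift 2 0) 0); rewrite CEu !mxE /ent /=; lra.
- by move: (H (lshift 2 1) 0); rewrite CEu !mxE /ent /=; lra.
Qed.

Lemma sumC : \sum_(j < 5) CC j = 0.
Proof.
apply/matrixP => a b; rewrite summxE [RHS]mxE.
rewrite -(splitK a); case: (split a) => x /=.
  rewrite (eq_bigr _ (fun i _ => CEu i x b)).
  move: x b; apply: ord2P; apply: ord2P;
  rewrite !big_ord_recr big_ord0 /= !mxE /ent /=; lra.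
rewrite (eq_bigr _ (fun i _ => CEd i x b)).
move: x b; apply: ord2P; apply: ord2P;
rewrite !big_ord_recr big_ord0 /= !dot2E !mxE /ent /=; lra.
Qed.

Lemma kapgt k : 1 < kap k.
Proof. move: k; apply: ord5P; rewrite /kap /=; lra. Qed.

Lemma alnz k : al k != 0.
Proof.
apply/eqP => /matrixP H; move: k H; apply: ord5P => H.
- by move: (H 0 0); rewrite !mxE /ent /=; lra.
- by move: (H 1 0); rewrite !mxE /ent /=; lra.
- by move: (H 0 0); rewrite !mxE /ent /=; lra.
- by move: (H 0 0); rewrite !mxE /ent /=; lra.
- by move: (H 0 0); rewrite !mxE /ent /=; lra.
Qed.

Lemma sumP : \sum_(j < 5) pp j *m (al j)^T = 0.
Proof.
apply/matrixP => a b; rewrite summxE [RHS]mxE.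
rewrite (eq_bigr (fun j => pp j a 0 * al j b 0)); last first.
  by move=> j _; rewrite !mxE big_ord1 !mxE.
move: a b; apply: ord2P; apply: ord2P;
rewrite !big_ord_recr big_ord0 /= !mxE /ent /=; lra.
Qed.

Lemma sumQ (a b c : 'I_2) :
  \sum_(j < 5) qq j a 0 * al j b 0 * al j c 0 = 0.
Proof.
move: a b c; apply: ord2P; apply: ord2P; apply: ord2P;
rewrite !big_ord_recr big_ord0 /= !mxE /ent /=; lra.
Qed.

Theorem proposition2p1 :
  exists (X : 'I_5 -> mat42 Rdefinitions.R) (c d : 'I_5 -> Rdefinitions.R),
    in_Mprime X /\
    forall i j : 'I_5, i != j ->
      c i - c j + d i * \det (blockA (X i) - blockA (X j))
        + frob (blockA (X i) - blockA (X j)) (blockB (X i) *m Jmx _) < 0.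
Proof.
exists XX, cc, ddd; split; last exact: ineq.
exists 0, CC, kap, pp, qq, al, delta; split.
  split => //; [exact: rankC | exact: sumC | exact: kapgt].
split => //; [exact: alnz | | exact: sumP | exact: sumQ].
exists 0, 1, 2%:R; split => //; split; apply: ncol; rewrite !mxE /ent /=;
  apply/eqP; lra.
Qed.
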